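(* Let $m\ge 2$ and $\alpha\in[0,1]$. For elections with $m$ alternatives, the price of ignoring intensities under voluntary elicitation satisfies $$\mathsf{PoII}^v(\alpha)\ge\frac{3}{2\alpha^{\lfloor m/2\rfloor}+1}.$$
   Context: An election $\mathcal E=(N,A,\vec\sigma)$ has agents $N$, alternatives $A$ with $|A|=m$, and $\sigma_i=(\pi_i,\Join_i)$, where $\pi_i:[m]\to A$ is a bijection ($\pi_i(1)$ most preferred) and $\Join_i:[m-1]\to\{\succ,\succ\!\!\succ\}$. We write $\vec\pi$ for the ranking part of the profile. A metric $d$ on $N\cup A$ is nonnegative and symmetric, satisfies the triangle inequality, and has $d(x,x)=0$. The profile $\vec\sigma$ is $\alpha$-consistent with $d$ under voluntary elicitation if: - every agent $i$ has $d(i,\pi_i(j))\le d(i,\pi_i(j+1))$ for all $j\in[m-1]$; - whenever $\Join_i(j)=\,\succ\!\!\succ$, we have $d(i,\pi_i(j))\le\alpha\, d(i,\pi_i(j+1))$. Let $\mathsf{dist}^v_\alpha(a,\mathcal E)=\sup_d\sum_i d(i,a)/\min_b\sum_i d(i,b)$, with the supremum over metrics $d$ with which $\vec\sigma$ is $\alpha$-consistent under voluntary elicitation. The price of ignoring intensities is defined as follows. - $\mathsf{PoII}^v(a,\mathcal E,\alpha)=\mathsf{dist}^v_\alpha(a,\mathcal E)/\min_{b\in A}\mathsf{dist}^v_\alpha(b,\mathcal E)$. - $\mathsf{PoII}^v(a,\vec\pi,\alpha)=\max_{\mathcal E}\mathsf{PoII}^v(a,\mathcal E,\alpha)$, where the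 maximum is over elections with the same agents and alternatives and ranking part $\vec\pi$ (with arbitrary intensities). - $\mathrm{opt}^{v\text{-}\mathrm{ob}}_\alpha(\vec\pi)\in\arg\min_a\mathsf{PoII}^v(a,\vec\pi,\alpha)$. - $\mathsf{PoII}^v(\mathcal E,\alpha)=\mathsf{PoII}^v(\mathrm{opt}^{v\text{-}\mathrm{ob}}_\alpha(\vec\pi),\mathcal E,\alpha)$. - $\mathsf{PoII}^v(\alpha)=\sup_{\mathcal E}\mathsf{PoII}^v(\mathcal E,\alpha)$ over all elections with $m$ alternatives. *)

(* Defs.v *)
From HB Require Import structures.
From mathcomp Require Import all_boot all_order all_algebra all_fingroup.
From mathcomp Require Import boolp classical_sets reals constructive_ereal ereal.
Set Implicit Arguments. Unset Strict Implicit. Unset Printing Implicit Defensive.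
Import Order.TTheory GRing.Theory Num.Theory.
Local Open Scope ring_scope.
Local Open Scope classical_set_scope.

Section PoII.
Context {R : realType}.

(* Points of N ∪ A: agents are [inl i] (i : 'I_n), alternatives are [inr a]
   (a : 'I_m).  A profile ranking part [pi : 'I_n -> {perm 'I_m}] gives, for
   agent i, [pi i j] = the alternative ranked at (0-indexed) position j.
   Intensities [s : 'I_n -> 'I_m -> bool]: [s i j = true] means the
   comparison between positions j and j+1 is strong (≻≻); the value at
   the last position j = m-1 is irrelevant (there is no position m). *)

Definition is_metric {n m : nat} (d : 'I_n + 'I_m -> 'I_n + 'I_m -> R) : Prop :=
  forall x y z : 'I_n + 'I_m,
    0 <= d x y /\ d x y = d y x /\ d x x = 0 /\ d x z <= d x y + d y z.

Definition consistent_v {n m : nat} (alpha : R) (pi : 'I_n -> {perm 'I_m})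
    (s : 'I_n -> 'I_m -> bool) (d : 'I_n + 'I_m -> 'I_n + 'I_m -> R) : Prop :=
  forall (i : 'I_n) (j k : 'I_m), val k = (val j).+1 ->
    d (inl i) (inr (pi i j)) <= d (inl i) (inr (pi i k)) /\
    (s i j -> d (inl i) (inr (pi i j)) <= alpha * d (inl i) (inr (pi i k))).

Definition SC {n m : nat} (d : 'I_n + 'I_m -> 'I_n + 'I_m -> R) (a : 'I_m) : R :=
  \sum_(i < n) d (inl i) (inr a).

(* min_b SC d b  (seeded with SC d a, which is one of the terms) *)
Definition minSC {n m : nat} (d : 'I_n + 'I_m -> 'I_n + 'I_m -> R) (a : 'I_m) : R :=
  \big[Num.min/SC d a]_(b < m) SC d b.

Definition eratio (x y : \bar R) : \bar R :=
  match y with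
  | r%:E => if r == 0 then (if x == 0%E then 1%E else +oo%E) else (x * (r^-1)%:E)%E
  | +oo%E => if x == +oo%E then 1%E else 0%E
  | -oo%E => 0%E
  end.

Definition dist_v {n m : nat} (alpha : R) (pi : 'I_n -> {perm 'I_m})
    (s : 'I_n -> 'I_m -> bool) (a : 'I_m) : \bar R :=
  ereal_sup [set eratio (SC d a)%:E (minSC d a)%:E |
              d in [set d | is_metric d /\ consistent_v alpha pi s d]].

Definition min_dist_v {n m : nat} (alpha : R) (pi : 'I_n -> {perm 'I_m})
    (s : 'I_n -> 'I_m -> bool) (a : 'I_m) : \bar R :=
  \big[Order.min/dist_v alpha pi s a]_(b < m) dist_v alpha pi s b.

Definition PoII_E {n m : nat} (alpha : R) (pi : 'I_n -> {perm 'I_m})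
    (s : 'I_n -> 'I_m -> bool) (a : 'I_m) : \bar R :=
  eratio (dist_v alpha pi s a) (min_dist_v alpha pi s a).

Definition PoII_pi {n m : nat} (alpha : R) (pi : 'I_n -> {perm 'I_m})
    (a : 'I_m) : \bar R :=
  ereal_sup [set PoII_E alpha pi s a | s in [set: 'I_n -> 'I_m -> bool]].

(* opt is a selection of opt^{v-ob}_alpha: for every number of agents n and
   ranking profile pi, opt n pi is in argmin_a PoII^v(a, pi, alpha). *)
Definition is_opt_vob (m : nat) (alpha : R)
    (opt : forall n : nat, ('I_n -> {perm 'I_m}) -> 'I_m) : Prop :=
  forall (n : nat) (pi : 'I_n -> {perm 'I_m}) (b : 'I_m),
    (PoII_pi alpha pi (opt n pi) <= PoII_pi alpha pi b)%E.

Definition PoII_v (m : nat) (alpha : R)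
    (opt : forall n : nat, ('I_n -> {perm 'I_m}) -> 'I_m) : \bar R :=
  ereal_sup [set x | exists (n : nat) (pi : 'I_n -> {perm 'I_m})
                             (s : 'I_n -> 'I_m -> bool),
                       (0 < n)%N /\ x = PoII_E alpha pi s (opt n pi)].

End PoII.

(* Main.v *)
Require Import Defs.
From HB Require Import structures.
From mathcomp Require Import all_boot all_order all_algebra all_fingroup.
From mathcomp Require Import boolp classical_sets reals constructive_ereal ereal.
From mathcomp Require Import lra zify.
Import Order.TTheory GRing.Theory Num.Theory.
Local Open Scope ring_scope.

Section Aux.
Set Implicit Arguments. Unset Strict Implicit.
Variable R : realType.

Lemma cons_mono n m (alpha : R) (pi : 'I_n -> {perm 'I_m}) s d :
  consistent_v alpha pi s d -> forall i (j j' : 'I_m), (j <= j')%N ->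
  d (inl i) (inr (pi i j)) <= d (inl i) (inr (pi i j')).
Proof.
move=> H i j j0 le.
suff P : forall t (j' : 'I_m), val j' = (j + t)%N ->
  d (inl i) (inr (pi i j)) <= d (inl i) (inr (pi i j')).
  by apply: (P (j0 - j)%N); rewrite subnKC.
clear le; elim => [|t IH] j' E.
  by have -> : j' = j by apply/val_inj; rewrite /= E addn0.
have lt : (j + t < m)%N by rewrite (leq_ltn_trans _ (ltn_ord j')) // E addnS.
apply: le_trans (IH (Ordinal lt) erefl) _.
by have [] := H i (Ordinal lt) j'; rewrite // E addnS.
Qed.

Lemma cons_chain n m (alpha : R) (pi : 'I_n -> {perm 'I_m.+1}) s d i K :
  consistent_v alpha pi s d -> 0 <= alpha ->
  (forall j : 'I_m.+1, (j < K)%N -> s i j) -> (K < m.+1)%N ->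
  forall j : 'I_m.+1, (K <= j)%N ->
  d (inl i) (inr (pi i ord0)) <= alpha ^+ K * d (inl i) (inr (pi i j)).
Proof.
move=> H a0 Hs HK j Kj.
suff P : forall t (jt : 'I_m.+1), val jt = t -> (t <= K)%N ->
  d (inl i) (inr (pi i ord0)) <= alpha ^+ t * d (inl i) (inr (pi i jt)).
  apply: le_trans (P K (Ordinal HK) erefl (leqnn _)) _.
  by apply: ler_wpM2l; [exact: exprn_ge0|exact: (@cons_mono _ _ _ _ _ _ H i (Ordinal HK) j Kj)].
elim => [|t IH] jt E tK.
  have -> : jt = ord0 by apply/val_inj; rewrite /= E.
  by rewrite expr0 mul1r.
have lt : (t < m.+1)%N by rewrite (leq_ltn_trans _ (ltn_ord jt)) // E.
apply: le_trans (IH (Ordinal lt) erefl (ltnW tK)) _.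
have [_ st] := H i (Ordinal lt) jt E.
rewrite exprSr -mulrA; apply: ler_wpM2l; first exact: exprn_ge0.
by apply: st; apply: Hs.
Qed.

Lemma SC2 m (d : 'I_2 + 'I_m -> 'I_2 + 'I_m -> R) (u v : 'I_2) b :
  u != v -> SC d b = d (inl u) (inr b) + d (inl v) (inr b).
Proof.
move=> uv; rewrite /SC (bigD1 u) //= (bigD1 v) /=; last by rewrite eq_sym.
rewrite big1 ?addr0 // => i /andP[iu iv]; exfalso; move: iu iv uv.
by case: i u v => [[|[|i]] Hi] [[|[|u]] Hu] [[|[|v]] Hv].
Qed.

Lemma SC_ge0 n m (d : 'I_n + 'I_m -> 'I_n + 'I_m -> R) b :
  is_metric d -> 0 <= SC d b.
Proof. by move=> Hm; apply: sumr_ge0 => i _; have [] := Hm (inl i) (inr b) (inr b). Qed.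

Lemma minSC_ge0 n m (d : 'I_n + 'I_m -> 'I_n + 'I_m -> R) b :
  is_metric d -> 0 <= minSC d b.
Proof. by move=> Hm; apply: le_bigmin => [|i _]; apply: SC_ge0. Qed.

Lemma eratio_ge0 (x y : R) : 0 <= x -> 0 <= y -> (0 <= eratio x%:E y%:E)%E.
Proof.
move=> x0 y0; rewrite /eratio; case: eqP => [_|/eqP y0'].
  by case: ifP.
by rewrite -EFinM lee_fin mulr_ge0 // invr_ge0.
Qed.

Definition schain m (v : 'I_2) (K : nat) : 'I_2 -> 'I_m -> bool :=
  fun i j => (i == v) && (j < K)%N.

Lemma dist_ub m (alpha : R) K (pi : 'I_2 -> {perm 'I_m.+1}) (u v : 'I_2) :
  u != v -> 0 <= alpha -> (K < m.+1)%N ->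
  (forall c, (exists2 j : 'I_m.+1, (K <= j)%N & pi v j = c) \/
     (exists j j' : 'I_m.+1, [/\ (j <= j')%N, pi u j = pi v ord0 & pi u j' = c])) ->
  (dist_v alpha pi (schain v K) (pi v ord0) <= (2 * alpha ^+ K + 1)%:E)%E.
Proof.
move=> uv a0 HK Hc; apply: ub_ereal_sup => x [d [Hm Hcons] <-].
set f := pi v ord0; set B := 2 * alpha ^+ K + 1.
have b0 : 0 <= alpha ^+ K by apply: exprn_ge0.
have B1 : 1 <= B by rewrite /B; lra.
have key : forall c, SC d f <= B * SC d c.
  move=> c; rewrite !(SC2 _ _ uv).
  have [[j Kj <-]|[j [j' [jj' fj <-]]]] := Hc c.
  - have Hs : forall j0 : 'I_m.+1, (j0 < K)%N -> schain v K v j0.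
      by move=> j0 h; rewrite /schain eqxx.
    have ch := cons_chain Hcons a0 Hs HK Kj.
    have [_ [_ [_ t1]]] := Hm (inl u) (inr (pi v j)) (inr f).
    have [_ [s1 [_ t2]]] := Hm (inr (pi v j)) (inl v) (inr f).
    have [n1 [s2 _]] := Hm (inl v) (inr (pi v j)) (inr f).
    have [n2 _] := Hm (inl u) (inr (pi v j)) (inr f).
    have [n3 _] := Hm (inl v) (inr f) (inr f).
    rewrite s1 in t2.
    have : 0 <= alpha ^+ K * d (inl u) (inr (pi v j)) by apply: mulr_ge0.
    rewrite /B; nra.
  - have m1 := cons_mono Hcons u jj'; rewrite fj in m1.
    have m2 : d (inl v) (inr f) <= d (inl v) (inr (pi u j')).
      by rewrite /f -[pi u j'](permKV (pi v)); exact: (@cons_mono _ _ _ _ _ _ Hcons v ord0 _ (leq0n _)).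
    have [n2 _] := Hm (inl u) (inr (pi u j')) (inr f).
    have [n3 _] := Hm (inl v) (inr (pi u j')) (inr f).
    nra.
have lb : SC d f / B <= minSC d f.
  have Bp : 0 < B by lra.
  apply: le_bigmin => [|c _]; rewrite ler_pdivrMr // mulrC.
    by have := SC_ge0 f Hm; nra.
  exact: key.
have Bp : 0 < B by lra.
have S0 := SC_ge0 f Hm.
rewrite /eratio; case: eqP => [z|/eqP nz].
  have : SC d f <= 0 by move: lb; rewrite z ler_pdivrMr // mul0r.
  move=> h; have -> : SC d f = 0 by apply/le_anti; rewrite h S0.
  by rewrite eqxx lee_fin.
have mp : 0 < minSC d f by rewrite lt_def nz minSC_ge0.
rewrite -EFinM lee_fin ler_pdivrMr //; move: lb; rewrite ler_pdivrMr // => lb.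
by rewrite mulrC.
Qed.

Definition Dn (p q : nat) : R :=
  if p == q then 0 else if (p == 1)%N || (q == 1)%N then 1 else 2.

Lemma Dn_bounds p q : p != q -> 1 <= Dn p q <= 2.
Proof. by rewrite /Dn => /negbTE ->; case: ifP => _; lra. Qed.

Lemma Dn_metric p q r :
  0 <= Dn p q /\ Dn p q = Dn q p /\ Dn p p = 0 /\ Dn p r <= Dn p q + Dn q r.
Proof.
split; first by rewrite /Dn; case: ifP => _ //; case: ifP => _; lra.
split; first by rewrite /Dn eq_sym orbC.
split; first by rewrite /Dn eqxx.
have D0 : forall x y, 0 <= Dn x y by move=> x y; rewrite /Dn; case: ifP => _ //; case: ifP => _; lra.
case: (p =P r) => [->|pr]; first by rewrite {1}/Dn eqxx addr_ge0.
case: (p =P q) => [->|pq]; first by rewrite {2}/Dn eqxx add0r.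
case: (q =P r) => [->|qr]; first by rewrite [Dn r r]/Dn eqxx addr0.
have /andP[_ h1] := Dn_bounds (introN eqP pr).
have /andP[h2 _] := Dn_bounds (introN eqP pq).
have /andP[h3 _] := Dn_bounds (introN eqP qr).
lra.
Qed.

Definition loc m (pi : 'I_2 -> {perm 'I_m}) (v : 'I_2) (a : 'I_m)
  (x : 'I_2 + 'I_m) : nat :=
  match x with
  | inl i => if i == v then 0%N else 1%N
  | inr c => if ((pi v)^-1%g c < (pi v)^-1%g a)%N then 0%N else 2%N
  end.

Definition dlb m (pi : 'I_2 -> {perm 'I_m}) v a : 'I_2 + 'I_m -> 'I_2 + 'I_m -> R :=
  fun x y => Dn (loc pi v a x) (loc pi v a y).

Lemma dist_lb m (alpha : R) K (pi : 'I_2 -> {perm 'I_m.+1}) (u v : 'I_2) a (j0 : 'I_m.+1) :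
  u != v -> 0 <= alpha -> (0 < K)%N -> (K <= j0)%N -> pi v j0 = a ->
  (3%:E <= dist_v alpha pi (schain v K) a)%E /\
  forall b, (0 <= dist_v alpha pi (schain v K) b)%E.
Proof.
move=> uv a0 K0 Kj0 E.
set d := dlb pi v a.
have Hm : is_metric d by move=> x y z; exact: Dn_metric.
have pa : (pi v)^-1%g a = j0 by rewrite -E permK.
have dv : forall j, d (inl v) (inr (pi v j)) = if (j < j0)%N then 0 else 2.
  by move=> j; rewrite /d /dlb /loc eqxx permK pa; case: ifP.
have du : forall i c, i != v -> d (inl i) (inr c) = 1.
  by move=> i c iv; rewrite /d /dlb /loc (negbTE iv); case: ifP => _.
have Hc : consistent_v alpha pi (schain v K) d.
  move=> i j k Ek; case: (i =P v) => [->|/eqP iv].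
  - rewrite !dv /schain eqxx /=.
    have g0 : 0 <= (if (k < j0)%N then 0 else 2 : R) by case: ifP => _ //; lra.
    case: (ltnP j j0) => hj.
      by split => // _; apply: mulr_ge0.
    have hk : (j0 <= k)%N by rewrite Ek (leq_trans hj).
    rewrite ltnNge hk /=; split => // hjK; exfalso.
    by move: (leq_trans Kj0 hj); rewrite leqNgt hjK.
  - by rewrite /schain (negbTE iv) /= !du.
have SCa : SC d a = 3.
  by rewrite (SC2 _ _ uv) du // -E dv ltnn; lra.
have SCf : SC d (pi v ord0) = 1.
  by rewrite (SC2 _ _ uv) du // dv (leq_trans K0 Kj0); lra.
have mle : minSC d a <= 1 by rewrite -SCf; apply: bigmin_le.
have mge : 0 <= minSC d a by apply: minSC_ge0.
split.
  have H : (eratio (SC d a)%:E (minSC d a)%:E <= dist_v alpha pi (schain v K) a)%E.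
    by apply: ereal_sup_ubound; exists d.
  apply: le_trans H; rewrite SCa /eratio; case: eqP => [_|/eqP nz].
    by rewrite eqe pnatr_eq0 /= leey.
  have mp : 0 < minSC d a by rewrite lt_def nz mge.
  rewrite -EFinM lee_fin ler_pdivlMr //; nra.
move=> b.
have H : (eratio (SC d b)%:E (minSC d b)%:E <= dist_v alpha pi (schain v K) b)%E.
  by apply: ereal_sup_ubound; exists d.
apply: le_trans H; apply: eratio_ge0; [exact: SC_ge0|exact: minSC_ge0].
Qed.

Lemma poii_gen m (alpha : R) K (pi : 'I_2 -> {perm 'I_m.+1}) (u v : 'I_2) a (j0 : 'I_m.+1) :
  u != v -> 0 <= alpha -> (0 < K)%N -> (K < m.+1)%N -> (K <= j0)%N -> pi v j0 = a ->
  (forall c, (exists2 j : 'I_m.+1, (K <= j)%N & pi v j = c) \/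
     (exists j j' : 'I_m.+1, [/\ (j <= j')%N, pi u j = pi v ord0 & pi u j' = c])) ->
  ((3 / (2 * alpha ^+ K + 1))%:E <= PoII_E alpha pi (schain v K) a)%E.
Proof.
move=> uv a0 K0 HK Kj0 E Hc.
have [lb nn] := dist_lb uv a0 K0 Kj0 E.
have ub := dist_ub uv a0 HK Hc.
set B := 2 * alpha ^+ K + 1.
have b0 : 0 <= alpha ^+ K by apply: exprn_ge0.
have Bp : 0 < B by rewrite /B; lra.
have mdle : (min_dist_v alpha pi (schain v K) a <= B%:E)%E.
  by apply: le_trans ub; apply: bigmin_le.
have mdge : (0 <= min_dist_v alpha pi (schain v K) a)%E.
  by apply: le_bigmin => [|b _]; apply: nn.
rewrite /PoII_E; move: mdle mdge.
case: (min_dist_v alpha pi (schain v K) a) => [r| |] //.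
rewrite !lee_fin => rB r0; rewrite /eratio; case: eqP => [_|/eqP nz].
  have -> : (dist_v alpha pi (schain v K) a == 0%E) = false.
    apply/negbTE/eqP => h; move: lb; rewrite h lee_fin; lra.
  exact: leey.
have rp : 0 < r by rewrite lt_def nz r0.
apply: le_trans (lee_wpmul2r _ lb); last by rewrite lee_fin invr_ge0 ltW.
rewrite -EFinM lee_fin ler_pdivrMr // mulrAC ler_pdivlMr //; nra.
Qed.

End Aux.
Unset Implicit Arguments. Set Strict Implicit.

Definition rotf (M K : nat) (j : 'I_M.+2) : 'I_M.+2 := inord ((j + K) %% M.+2).

Lemma rotf_val M K j : nat_of_ord (rotf M K j) = ((j + K) %% M.+2)%N.
Proof. by rewrite /rotf inordK // ltn_pmod. Qed.

Lemma rotf_inj M K : injective (rotf M K).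
Proof.
move=> x y /(congr1 (@nat_of_ord _)); rewrite !rotf_val => /eqP.
by rewrite eqn_modDr !modn_small // => /eqP /val_inj.
Qed.

Definition prof M K : 'I_2 -> {perm 'I_M.+2} :=
  fun i => if i == ord0 then 1%g else perm (@rotf_inj M K).

Lemma prof0 M K j : prof M K ord0 j = j.
Proof. by rewrite /prof eqxx perm1. Qed.

Lemma prof1 M K j : prof M K ord_max j = rotf M K j.
Proof. by rewrite /prof /= permE. Qed.

Lemma rot_back M K (c : 'I_M.+2) : (K <= M.+2)%N -> (c < K)%N ->
  rotf M K (inord (c + (M.+2 - K))) = c.
Proof.
move=> KM cK; apply/val_inj => /=; rewrite rotf_val inordK; last by lia.
by rewrite -addnA subnK // modnDr modn_small.
Qed.

Theorem theorem10 (R : realType) (m : nat) (alpha : R)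
    (opt : forall n : nat, ('I_n -> {perm 'I_m}) -> 'I_m) :
  (2 <= m)%N -> 0 <= alpha -> alpha <= 1 ->
  is_opt_vob alpha opt ->
  ((3 / (2 * alpha ^+ (m./2) + 1))%:E <= PoII_v alpha opt)%E.
Proof.
move=> m2 a0 a1 _.
case: m m2 opt => [|[|M]] // _ opt.
have KK : (((M.+2)./2).*2 <= M.+2)%N.
  by rewrite -[X in (_ <= X)%N](odd_double_half M.+2) leq_addl.
move: KK; set K := (M.+2)./2 => KK.
have K0 : (0 < K)%N by [].
rewrite -addnn in KK.
have HK : (K < M.+2)%N by lia.
pose pi := prof M K.
pose a := opt 2%N pi.
have [s Hs] : exists s, ((3 / (2 * alpha ^+ K + 1))%:E <= PoII_E alpha pi s a)%E.
  case: (ltnP a K) => aK.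
  - exists (schain ord_max K).
    apply: (poii_gen (u:=ord0) (v:=ord_max) (j0:=inord (a + (M.+2 - K)))) => //.
    + by rewrite inordK; lia.
    + by rewrite /pi prof1 rot_back //; lia.
    + move=> c; case: (ltnP c K) => cK.
        left; exists (inord (c + (M.+2 - K))); first by rewrite inordK; lia.
        by rewrite /pi prof1 rot_back //; lia.
      right; exists (inord K), c; split => //.
        by rewrite inordK.
      rewrite /pi prof0 prof1; apply/val_inj => /=; rewrite rotf_val inordK //.
      by rewrite add0n modn_small.
    by rewrite /pi prof0.
  - exists (schain (ord0 : 'I_2) K).
    apply: (poii_gen (u:=ord_max) (v:=ord0) (j0:=a)) => //.
    + by rewrite /pi prof0.
    + move=> c; case: (ltnP c K) => cK.
        right; exists (inord (M.+2 - K)), (inord (c + (M.+2 - K))); split.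
        * by rewrite !inordK; lia.
        * rewrite /pi prof1 prof0; apply/val_inj => /=; rewrite rotf_val inordK; last by lia.
          by rewrite subnK ?modnn //; lia.
        * by rewrite /pi prof1 rot_back //; lia.
      by left; exists c => //; rewrite /pi prof0.
apply: le_trans Hs _; apply: ereal_sup_ubound; exists 2%N, pi, s; split => //.
Qed.
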